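(* Let $(G,\sigma)$ be a connection graph and $i\neq j\in V$, and write $\mathcal{C}^\sigma(i,j)=\begin{bmatrix}\mathcal{C}^\sigma_{ii}&\mathcal{C}^\sigma_{ij}\\ \mathcal{C}^\sigma_{ji}&\mathcal{C}^\sigma_{jj}\end{bmatrix}$. Then $$\mathcal{C}^\sigma(i,j)/\mathcal{C}^\sigma_{jj}=\deg(i)(I_{d\times d}-\Omega^1_i)\quad\text{and}\quad \mathcal{C}^\sigma(i,j)/\mathcal{C}^\sigma_{ii}=\deg(j)(I_{d\times d}-\Omega^1_j).$$
   Context: A connection graph $(G,\sigma)$: finite connected weighted graph $G=(V,E,W)$, $V=\{1,\dots,n\}$, $w_{xy}>0$ iff $\{x,y\}\in E$, $\deg(x)=\sum_y w_{xy}$, and $\sigma$ mapping oriented edges to $\mathsf{O}(d)$ with $\sigma_{yx}=\sigma_{xy}^{\mathrm T}$. Connection Laplacian $\mathcal{L}$: $nd\times nd$ block matrix with blocks $\deg(x)I_d$ on the diagonal, $-w_{xy}\sigma_{xy}$ for $x\sim y$, $0$ otherwise. For a block matrix $M=\begin{bmatrix}A&B\\C&D\end{bmatrix}$ with $A,D$ square, $M/A=D-CA^\dagger B$ and $M/D=A-BD^\dagger C$. The conductance matrix $\mathcal{C}^\sigma(i,j)=\mathcal{L}/\mathcal{L}_{\{i,j\}^c,\{i,j\}^c}$, blocks ordered $i$ then $j$. $(X_t)$: simple random walk with transition probabilities $w_{xy}/\deg(x)$; $T^1_i=\inf\{t\ge1:X_t=i\}$; $\Omega^1_i=\mathbb{E}\big[\prod_{\ell=1}^{T^1_i}\sigma_{X_{\ell-1}X_\ell}\mid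 X_0=i\big]$ (ordered product). *)

(* Defs.v *)
From HB Require Import structures.
From mathcomp Require Import all_boot all_order all_algebra.
From mathcomp Require Import boolp classical_sets filter reals topology normedtype.
Set Implicit Arguments. Unset Strict Implicit. Unset Printing Implicit Defensive.
Import numFieldNormedType.Exports.
Import Order.TTheory GRing.Theory Num.Theory.
Local Open Scope ring_scope.

Section ConnectionGraph.
Variables (R : realType) (n d : nat).
Variable w : 'I_n -> 'I_n -> R.             (* edge weights; w x y > 0 iff x ~ y *)
Variable sigma : 'I_n -> 'I_n -> 'M[R]_d.

Definition deg (x : 'I_n) : R := \sum_(y < n) w x y.

Definition connection_graph : Prop :=
  [/\ forall x y, w x y = w y x,
      forall x y, 0 <= w x y,
      forall x, w x x = 0
    & forall x y, connect [rel a b | 0 < w a b] x y] /\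
  [/\ forall x y, 0 < w x y -> sigma y x = (sigma x y)^T
    & forall x y, 0 < w x y ->
        (sigma x y)^T *m sigma x y = 1%:M /\ sigma x y *m (sigma x y)^T = 1%:M].

Definition lap_block (x y : 'I_n) : 'M[R]_d :=
  if x == y then (deg x)%:M else - (w x y *: sigma x y).

(* the submatrix L_{A,B} of the connection Laplacian, for ordered lists of
   vertices A and B (block rows indexed by A, block columns indexed by B) *)
Definition lap_sub (A B : seq 'I_n) :
    'M[R]_(\sum_(p < size A) d, \sum_(q < size B) d) :=
  @mxblock R _ _ (fun _ => d) (fun _ => d)
    (fun p q => lap_block (tnth (in_tuple A) p) (tnth (in_tuple B) q)).

End ConnectionGraph.

Definition is_pinv (R : realType) m k (A : 'M[R]_(m, k)) (X : 'M[R]_(k, m)) :=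
  [/\ A *m X *m A = A, X *m A *m X = X, (A *m X)^T = A *m X & (X *m A)^T = X *m A].

Definition pinv (R : realType) m k (A : 'M[R]_(m, k)) : 'M[R]_(k, m) :=
  xget 0 [set X | is_pinv A X].

Definition schurA (R : realType) a b (A : 'M[R]_a) (B : 'M[R]_(a, b))
  (C : 'M[R]_(b, a)) (D : 'M[R]_b) : 'M[R]_b := D - C *m pinv A *m B.
Definition schurD (R : realType) a b (A : 'M[R]_a) (B : 'M[R]_(a, b))
  (C : 'M[R]_(b, a)) (D : 'M[R]_b) : 'M[R]_a := A - B *m pinv D *m C.

Section Conductance.
Variables (R : realType) (n d : nat) (w : 'I_n -> 'I_n -> R)
  (sigma : 'I_n -> 'I_n -> 'M[R]_d).

(* conductance matrix C^sigma(i,j) = L / L_{{i,j}^c,{i,j}^c}, blocks ordered i, j *)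
Definition conductance (i j : 'I_n) : 'M[R]_(\sum_(p < 2) d) :=
  let S := [:: i; j] in
  let Sc := [seq x <- enum 'I_n | x \notin S] in
  schurD (lap_sub w sigma S S) (lap_sub w sigma S Sc)
         (lap_sub w sigma Sc S) (lap_sub w sigma Sc Sc).

(* its d x d blocks:  C_ii = blk 0 0, C_ij = blk 0 1, C_ji = blk 1 0, C_jj = blk 1 1 *)
Definition cond_blk (i j : 'I_n) (p q : 'I_2) : 'M[R]_d :=
  @submxblock R _ _ (fun _ => d) (fun _ => d) (conductance i j) p q.

Definition trans (x y : 'I_n) : R := w x y / deg w x.

Fixpoint walk_prob (x : 'I_n) (s : seq 'I_n) : R :=
  if s is y :: s' then trans x y * walk_prob y s' else 1.

Fixpoint walk_hol (x : 'I_n) (s : seq 'I_n) : 'M[R]_d :=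
  if s is y :: s' then sigma x y *m walk_hol y s' else 1%:M.

(* contribution of the event {T^1_i = t+1}: paths i, s_1, ..., s_t, i
   with all s_k <> i *)
Definition excursion_term (i : 'I_n) (t : nat) : 'M[R]_d :=
  \sum_(s : t.-tuple 'I_n | all (fun v => v != i) s)
     walk_prob i (rcons s i) *: walk_hol i (rcons s i).

(* Omega^1_i = E[ prod_{l=1}^{T^1_i} sigma_{X_{l-1} X_l} | X_0 = i ], the
   expectation written as the (convergent) series over the value of T^1_i *)
Definition Omega1 (i : 'I_n) : 'M[R]_d :=
  \matrix_(a, b) limn (fun N : nat => (\sum_(t < N) excursion_term i t) a b).

End Conductance.

(* Main.v *)
Require Import Defs.
From HB Require Import structures.
From mathcomp Require Import all_boot all_order all_algebra.
From mathcomp Require Import boolp classical_sets filter reals topology normedtype sequences.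
From mathcomp Require Import ring lra.
Unset Printing Implicit Defensive.
Import numFieldNormedType.Exports.
Import Order.TTheory GRing.Theory Num.Theory.
Local Open Scope ring_scope.

Section Main.
Variables (R : realType) (n d : nat) (w : 'I_n -> 'I_n -> R) (sigma : 'I_n -> 'I_n -> 'M[R]_d).
Hypothesis w_ge0 : forall x y, 0 <= w x y.

Lemma deg_ge0 x : 0 <= deg w x.
Proof. by apply: sumr_ge0 => y _; exact: w_ge0. Qed.

Lemma trans_ge0 x y : 0 <= trans w x y.
Proof. by rewrite /trans divr_ge0 // deg_ge0. Qed.

Lemma sum_trans1 x : deg w x != 0 -> \sum_y trans w x y = 1.
Proof. by move=> h; rewrite /trans -mulr_suml -/(deg w x) mulfV. Qed.

Lemma sum_trans_le1 x : \sum_y trans w x y <= 1.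
Proof.
have [h|h] := eqVneq (deg w x) 0; last by rewrite sum_trans1.
by rewrite big1 // => y _; rewrite /trans h invr0 mulr0.
Qed.

Lemma sum_transP_le1 (W : pred 'I_n) x : \sum_(y | W y) trans w x y <= 1.
Proof.
apply: le_trans (sum_trans_le1 x).
rewrite [X in _ <= X](bigID W) /= lerDl; apply: sumr_ge0 => y _; exact: trans_ge0.
Qed.

Definition Qop (W : pred 'I_n) (f : 'I_n -> R) (x : 'I_n) : R :=
  \sum_(y | W y) trans w x y * f y.

Definition vv (W : pred 'I_n) N := iter N (Qop W) (fun _ => 1).

Lemma Qop_mono (W : pred 'I_n) (f g : 'I_n -> R) : (forall y, W y -> f y <= g y) -> forall x, Qop W f x <= Qop W g x.
Proof.
move=> h x; apply: ler_sum => y Wy; apply: ler_wpM2l; [exact: trans_ge0 | exact: h].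
Qed.

Lemma Qop_scale (W : pred 'I_n) (c : R) (f : 'I_n -> R) : Qop W (fun y => c * f y) = (fun x => c * Qop W f x).
Proof.
apply: funext => x; rewrite /Qop mulr_sumr; apply: eq_bigr => y _.
by rewrite mulrCA.
Qed.

Lemma iter_mono (W : pred 'I_n) (f g : 'I_n -> R) : (forall y, W y -> f y <= g y) ->
  forall N x, W x -> iter N (Qop W) f x <= iter N (Qop W) g x.
Proof.
move=> h N; elim: N => [|N IH] x Wx /=; first exact: h.
by apply: Qop_mono => y Wy; apply: IH.
Qed.

Lemma iter_scale (W : pred 'I_n) (c : R) (f : 'I_n -> R) N : iter N (Qop W) (fun y => c * f y) = (fun x => c * iter N (Qop W) f x).
Proof. by elim: N => [|N IH] //=; rewrite IH Qop_scale. Qed.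

Lemma vv_ge0 (W : pred 'I_n) N x : 0 <= vv W N x.
Proof.
elim: N x => [|N IH] x /=; first exact: ler01.
by apply: sumr_ge0 => y _; apply: mulr_ge0; [exact: trans_ge0 | exact: IH].
Qed.

Lemma vv_le1 (W : pred 'I_n) N x : vv W N x <= 1.
Proof.
elim: N x => [|N IH] x /=; first exact: lexx.
apply: le_trans (sum_transP_le1 W x); apply: ler_sum => y _.
by rewrite -[X in _ <= X]mulr1; apply: ler_wpM2l; [exact: trans_ge0 | exact: IH].
Qed.

Lemma vv_decr (W : pred 'I_n) N x : W x -> vv W N.+1 x <= vv W N x.
Proof.
move=> Wx; rewrite /vv iterSr; apply: iter_mono => // y _.
exact: (vv_le1 W 1 y).
Qed.

Lemma vv_mono (W : pred 'I_n) N M x : W x -> (N <= M)%N -> vv W M x <= vv W N x.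
Proof.
move=> Wx /subnK <-; elim: (M - N)%N => [|k IH] //.
rewrite addSn; apply: (le_trans _ IH); exact: vv_decr.
Qed.


Lemma deg_ge_w x z : w x z <= deg w x.
Proof.
rewrite /deg (bigD1 z) //= lerDl; apply: sumr_ge0 => y _; exact: w_ge0.
Qed.

Lemma trans_gt0 x z : 0 < w x z -> 0 < trans w x z.
Proof.
move=> h; rewrite /trans divr_gt0 //; exact: lt_le_trans h (deg_ge_w x z).
Qed.

Lemma deg_neq0 x z : 0 < w x z -> deg w x != 0.
Proof. by move=> h; rewrite gt_eqF // (lt_le_trans h (deg_ge_w x z)). Qed.

Lemma sum_trans_neq x z : 0 < w x z ->
  \sum_(y | y != z) trans w x y = 1 - trans w x z.
Proof.
move=> h; rewrite -(sum_trans1 x (deg_neq0 x z h)) [in RHS](bigD1 z) //=.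
by rewrite addrC addrK.
Qed.

Lemma key_step (W : pred 'I_n) x z k : 0 < w x z ->
  vv W k.+1 x <= 1 - trans w x z + (if W z then trans w x z * vv W k z else 0).
Proof.
move=> h; rewrite /vv iterS -/(vv W k) /Qop -sum_trans_neq //.
have step : \sum_(y | W y && (y != z)) trans w x y * vv W k y
    <= \sum_(y | y != z) trans w x y.
  rewrite big_mkcondl /=; apply: ler_sum => y _.
  have t0 := trans_ge0 x y; have v1 := vv_le1 W k y; have v0 := vv_ge0 W k y.
  case: (W y) => //; first by rewrite -[X in _ <= X]mulr1; apply: ler_wpM2l.
case: ifP => Wz.
  by rewrite (bigD1 z) //= addrC lerD2r.
rewrite addr0; apply: le_trans step; rewrite [X in X <= _](eq_bigl (fun y => W y && (y != z))) //.
by move=> y /=; case: eqP => [->|]; rewrite ?Wz ?andbT.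
Qed.


Lemma path_bound (W : pred 'I_n) a x : ~~ W a -> W x ->
  connect [rel u v | 0 < w u v] x a ->
  exists k (e : R), 0 < e /\ vv W k x <= 1 - e.
Proof.
move=> Wa Wx /connectP [p]; elim: p x Wx => [|z p IH] x Wx /=.
  by move=> _ ea; move: Wa; rewrite ea Wx.
move=> /andP [exz pz] ea.
have t0 := trans_gt0 x z exz.
case Wz: (W z).
  have [k [e [e0 hk]]] := IH z Wz pz ea.
  exists k.+1, (trans w x z * e); split; first exact: mulr_gt0.
  apply: le_trans (key_step W x z k exz) _; rewrite Wz.
  have : trans w x z * vv W k z <= trans w x z * (1 - e) by apply: ler_wpM2l => //; exact: ltW.
  move=> hh; rewrite mulrBr mulr1 in hh.
  lra.
exists 1%N, (trans w x z); split => //.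
by have := key_step W x z 0 exz; rewrite Wz addr0; apply.
Qed.

Lemma unif_bound (W : pred 'I_n) a : ~~ W a ->
  (forall x, connect [rel u v | 0 < w u v] x a) ->
  exists m (c : R), [/\ 0 <= c, c < 1 & forall x, W x -> vv W m x <= c].
Proof.
move=> Wa conn.
suff [m [c [c0 c1 h]]] : exists m (c : R), [/\ 0 <= c, c < 1 &
   forall x, x \in enum 'I_n -> W x -> vv W m x <= c].
  by exists m, c; split => // x; apply: h; rewrite mem_enum.
elim: (enum 'I_n) => [|x l [m [c [c0 c1 h]]]].
  by exists 0%N, 0; split => //.
case Wx: (W x); last first.
  exists m, c; split => // y; rewrite inE => /orP [/eqP ->|]; first by rewrite Wx.
  exact: h.
have [k [e [e0 hk]]] := path_bound W a x Wa Wx (conn x).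
exists (maxn m k), (Num.max c (1 - e)); split.
- by rewrite le_max c0.
- by rewrite gt_max c1 /= gtrBl.
- move=> y; rewrite inE => /orP [/eqP -> _|yl Wy].
    apply: le_trans (vv_mono W k (maxn m k) x Wx (leq_maxr _ _)) _.
    by apply: le_trans hk _; rewrite le_max lexx orbT.
  apply: le_trans (vv_mono W m (maxn m k) y Wy (leq_maxl _ _)) _.
  by apply: le_trans (h y yl Wy) _; rewrite le_max lexx.
Qed.

Lemma geom_bound (W : pred 'I_n) m (c : R) : 0 <= c ->
  (forall x, W x -> vv W m x <= c) ->
  forall k x, W x -> vv W (k * m) x <= c ^+ k.
Proof.
move=> c0 h; elim => [|k IH] x Wx; first by rewrite mul0n expr0 /=; exact: lexx.
rewrite mulSn /vv iterD -/(vv W (k * m)).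
have h1 : forall y, W y -> vv W (k * m) y <= (c ^+ k) * (fun _ => 1) y.
  by move=> y Wy; rewrite mulr1; exact: IH.
apply: le_trans (iter_mono W _ _ h1 m x Wx) _.
rewrite iter_scale -/(vv W m) exprSr mulrC [X in _ <= X]mulrC.
by apply: ler_wpM2r; [exact: exprn_ge0 | exact: h].
Qed.

Lemma vanish (W : pred 'I_n) a : ~~ W a ->
  (forall x, connect [rel u v | 0 < w u v] x a) ->
  forall eps : R, 0 < eps -> exists N, forall M, (N <= M)%N ->
  forall x, W x -> vv W M x < eps.
Proof.
move=> Wa conn eps e0.
have [m [c [c0 c1 h]]] := unif_bound W a Wa conn.
have hc : `|c| < 1 by rewrite ger0_norm.
have hcv := cvg_expr hc.
have [N _ hN] := proj1 (cvgrPdist_lt (fun k : nat => c ^+ k) 0) hcv eps e0.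
exists (N * m)%N => M hM x Wx.
apply: le_lt_trans (vv_mono W (N * m) M x Wx hM) _.
apply: le_lt_trans (geom_bound W m c c0 h N x Wx) _.
have := hN N (leqnn N); rewrite /= sub0r normrN ger0_norm //; exact: exprn_ge0.
Qed.


Lemma cs_sum (I : finType) (P : pred I) (p z : I -> R) :
  (forall y, P y -> 0 <= p y) ->
  (\sum_(y | P y) p y * z y) ^+ 2 <=
  (\sum_(y | P y) p y) * \sum_(y | P y) p y * z y ^+ 2.
Proof.
move=> p0.
set s := \sum_(y | P y) p y; set m := \sum_(y | P y) p y * z y.
set t := \sum_(y | P y) p y * z y ^+ 2.
have s0 : 0 <= s by apply: sumr_ge0.
have key : \sum_(y | P y) p y * (s * z y - m) ^+ 2 = s * (s * t - m ^+ 2).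
  rewrite (eq_bigr (fun y => s ^+ 2 * (p y * z y ^+ 2) - (2 * s * m) * (p y * z y)
     + m ^+ 2 * p y)); last by move=> y _; ring.
  rewrite big_split /= sumrB -!mulr_sumr -/s -/m -/t; clearbody s m t; ring.
have pos : 0 <= s * (s * t - m ^+ 2).
  rewrite -key; apply: sumr_ge0 => y Py; apply: mulr_ge0; [exact: p0|exact: sqr_ge0].
have [s00|sn0] := eqVneq s 0.
  have m0 : m = 0.
    rewrite /m big1 // => y Py.
    by rewrite (psumr_eq0P p0 s00 Py) mul0r.
  by rewrite m0 s00 mul0r expr0n.
have sp : 0 < s by rewrite lt_def sn0 s0.
rewrite -subr_ge0; rewrite pmulr_rge0 // in pos.
Qed.

Definition qn k (X : 'M[R]_(d, k)) : R := \sum_a \sum_b X a b ^+ 2.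
Arguments qn {k}.

Lemma qn_ge0 k (X : 'M[R]_(d, k)) : 0 <= qn X.
Proof. by apply: sumr_ge0 => a _; apply: sumr_ge0 => b _; exact: sqr_ge0. Qed.

Lemma qn_entry k (X : 'M[R]_(d, k)) a b : X a b ^+ 2 <= qn X.
Proof.
rewrite /qn (bigD1 a) //= (bigD1 b) //= -addrA lerDl.
apply: addr_ge0; first by apply: sumr_ge0 => c _; exact: sqr_ge0.
by apply: sumr_ge0 => c _; apply: sumr_ge0 => e _; exact: sqr_ge0.
Qed.

Lemma qn_eq0 k (X : 'M[R]_(d, k)) : qn X <= 0 -> X = 0.
Proof.
move=> h; have h0 : qn X = 0 by apply/eqP; rewrite eq_le h qn_ge0.
apply/matrixP => a b; rewrite mxE.
have := psumr_eq0P (fun a _ => sumr_ge0 _ (fun b _ => sqr_ge0 (X a b))) h0 (isT : true).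
move=> /(_ a) ha.
have := psumr_eq0P (fun b _ => sqr_ge0 (X a b)) ha (isT : true).
by move=> /(_ b) /eqP; rewrite sqrf_eq0 => /eqP.
Qed.

Lemma qn_tr k (X : 'M[R]_(d, k)) : qn X = \tr (X^T *m X).
Proof.
rewrite /qn /mxtrace exchange_big; apply: eq_bigr => b _; rewrite mxE.
by apply: eq_bigr => a _; rewrite !mxE expr2.
Qed.

Lemma qn_orth k (S : 'M[R]_d) (X : 'M[R]_(d, k)) : S^T *m S = 1%:M -> qn (S *m X) = qn X.
Proof.
by move=> h; rewrite !qn_tr trmx_mul mulmxA -(mulmxA X^T) h mulmx1.
Qed.

Lemma qn_conv k (I : finType) (P : pred I) (p : I -> R) (Z : I -> 'M[R]_(d, k)) :
  (forall y, P y -> 0 <= p y) -> \sum_(y | P y) p y <= 1 ->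
  qn (\sum_(y | P y) p y *: Z y) <= \sum_(y | P y) p y * qn (Z y).
Proof.
move=> p0 p1.
have e1 : forall a b, (\sum_(y | P y) p y *: Z y) a b = \sum_(y | P y) p y * Z y a b.
  by move=> a b; rewrite summxE; apply: eq_bigr => y _; rewrite mxE.
have e2 : \sum_(y | P y) p y * qn (Z y) = \sum_a \sum_b \sum_(y | P y) p y * Z y a b ^+ 2.
  rewrite /qn; under eq_bigr do rewrite mulr_sumr.
  rewrite exchange_big /=; apply: eq_bigr => a _.
  by under eq_bigr do rewrite mulr_sumr; rewrite exchange_big.
have T0 : 0 <= \sum_(y | P y) p y * qn (Z y).
  by apply: sumr_ge0 => y Py; apply: mulr_ge0; [exact: p0|exact: qn_ge0].
apply: le_trans (_ : _ <= (\sum_(y | P y) p y) * \sum_(y | P y) p y * qn (Z y)) _.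
  rewrite e2 mulr_sumr; apply: ler_sum => a _; rewrite mulr_sumr; apply: ler_sum => b _.
  by rewrite e1; exact: cs_sum.
by rewrite ler_piMl.
Qed.

Hypothesis w_diag : forall x, w x x = 0.
Hypothesis conn : forall x y, connect [rel u v | 0 < w u v] x y.
Hypothesis orth : forall x y, 0 < w x y -> (sigma x y)^T *m sigma x y = 1%:M.

Definition Pop k (W : pred 'I_n) (f : 'I_n -> 'M[R]_(d, k)) (x : 'I_n) : 'M[R]_(d, k) :=
  \sum_(y | W y) trans w x y *: (sigma x y *m f y).
Arguments Pop {k}.

Lemma qn_Pop k (W : pred 'I_n) (f : 'I_n -> 'M[R]_(d, k)) x :
  qn (Pop W f x) <= \sum_(y | W y) trans w x y * qn (f y).
Proof.
rewrite /Pop; apply: le_trans (qn_conv _ _ W (trans w x) (fun y => sigma x y *m f y)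
   (fun y _ => trans_ge0 x y) (sum_transP_le1 W x)) _.
apply: ler_sum => y _; have := w_ge0 x y; rewrite le_eqVlt => /orP [/eqP e|pos].
  by rewrite /trans -e !mul0r.
by rewrite (qn_orth _ _ _ (orth x y pos)).
Qed.

Lemma qn_iter k (W : pred 'I_n) (f : 'I_n -> 'M[R]_(d, k)) K :
  (forall y, W y -> qn (f y) <= K) ->
  forall N x, W x -> qn (iter N (Pop W) f x) <= K * vv W N x.
Proof.
move=> h; elim=> [|N IH] x Wx /=; first by rewrite mulr1; exact: h.
apply: le_trans (qn_Pop _ _ _ _) _.
rewrite /Qop mulr_sumr; apply: ler_sum => y Wy.
rewrite mulrCA; apply: ler_wpM2l; [exact: trans_ge0|exact: IH].
Qed.

Lemma Lform k (f : 'I_n -> 'M[R]_(d, k)) x :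
  \sum_y lap_block w sigma x y *m f y = deg w x *: f x - \sum_y w x y *: (sigma x y *m f y).
Proof.
rewrite (bigD1 x) //= [in RHS](bigD1 x) //= w_diag scale0r add0r /lap_block eqxx mul_scalar_mx.
rewrite -sumrN; congr (_ + _); apply: eq_bigr => y yx.
by rewrite eq_sym (negbTE yx) mulNmx -scalemxAl.
Qed.

Lemma harm_trans k (f : 'I_n -> 'M[R]_(d, k)) x :
  \sum_y lap_block w sigma x y *m f y = 0 -> deg w x != 0 ->
  f x = \sum_y trans w x y *: (sigma x y *m f y).
Proof.
rewrite Lform => /eqP; rewrite subr_eq0 => /eqP h dn.
have -> : f x = (deg w x)^-1 *: (deg w x *: f x) by rewrite scalerA mulVf // scale1r.
rewrite h scaler_sumr; apply: eq_bigr => y _; by rewrite scalerA mulrC.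
Qed.

Lemma deg_pos x z : z != x -> deg w x != 0.
Proof.
move=> zx; have /connectP [p pth ez] := conn x z.
case: p pth ez => [|y p] /=; first by move=> _ e; rewrite e eqxx in zx.
by move=> /andP [h _] _; exact: deg_neq0 x y h.
Qed.

Lemma uniq_harm k (W : pred 'I_n) a (f : 'I_n -> 'M[R]_(d, k)) : ~~ W a ->
  (forall x, ~~ W x -> f x = 0) ->
  (forall x, W x -> \sum_y lap_block w sigma x y *m f y = 0) -> forall x, f x = 0.
Proof.
move=> Wa f0 hf.
have dnz : forall x, W x -> deg w x != 0.
  move=> x Wx; apply: (deg_pos x a); apply/eqP => ax; move: Wa; by rewrite ax Wx.
have fx : forall x, W x -> f x = Pop W f x.
  move=> x Wx; rewrite (harm_trans _ f x (hf x Wx) (dnz x Wx)) (bigID W) /=.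
  by rewrite [X in _ + X]big1 ?addr0 // => y Wy; rewrite f0 // mulmx0 scaler0.
have itr : forall N x, W x -> iter N (Pop W) f x = f x.
  elim=> [|N IH] x Wx //=; rewrite [in RHS]fx //; apply: eq_bigr => y Wy; by rewrite IH.
move=> x; case Wx: (W x); last by apply: f0; rewrite Wx.
apply: qn_eq0; rewrite leNgt; apply/negP => hq.
set K := \sum_y qn (f y).
have K0 : 0 <= K by apply: sumr_ge0 => y _; exact: qn_ge0.
have hK : forall y, W y -> qn (f y) <= K.
  move=> y _; rewrite /K (bigD1 y) //= lerDl; apply: sumr_ge0 => z _; exact: qn_ge0.
have K1 : 0 < K + 1 by rewrite ltr_wpDl.
have [N hN] := vanish W a Wa (fun y => conn y a) (qn (f x) / (K + 1)) (divr_gt0 hq K1).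
have := qn_iter k W f K hK N x Wx; rewrite itr // => hle.
have := hN N (leqnn N) x Wx; rewrite ltr_pdivlMr // => hlt.
have hv := vv_ge0 W N x.
have : qn (f x) < qn (f x); last by rewrite ltxx.
apply: le_lt_trans hle _; apply: le_lt_trans hlt; rewrite mulrC; apply: ler_wpM2l => //; by rewrite lerDl.
Qed.

Section Omega.
Variable a : 'I_n.
Let W : pred 'I_n := fun y => y != a.
Let Wa : ~~ W a. Proof. by rewrite /W negbK. Qed.

Definition Ex (t : nat) (x : 'I_n) : 'M[R]_d :=
  \sum_(s : t.-tuple 'I_n | all (fun v => v != a) s)
     walk_prob w x (rcons s a) *: walk_hol sigma x (rcons s a).

Lemma Ex0 x : Ex 0 x = trans w x a *: sigma x a.
Proof.
rewrite /Ex (big_pred1 [tuple]) => [|s]; last by rewrite (tuple0 s) /=; case: eqP.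
by rewrite /= mulr1 mulmx1.
Qed.

Lemma ExS t x : Ex t.+1 x = Pop W (Ex t) x.
Proof.
rewrite /Ex /Pop.
pose hh := fun p : 'I_n * t.-tuple 'I_n => [tuple of p.1 :: p.2].
have hb : bijective hh.
  exists (fun u : t.+1.-tuple 'I_n => (thead u, [tuple of behead u])).
    by case=> y s; rewrite /hh /= theadE; congr pair; apply: val_inj.
  by move=> u; rewrite /hh /= [in RHS](tuple_eta u).
rewrite (reindex hh); last by apply: onW_bij.
rewrite -(pair_big_dep (fun y : 'I_n => y != a) (fun (_ : 'I_n) (s : t.-tuple 'I_n) => all (fun v => v != a) s)
   (fun (y : 'I_n) (s : t.-tuple 'I_n) => walk_prob w x (rcons (hh (y, s)) a) *: walk_hol sigma x (rcons (hh (y, s)) a))).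
apply: eq_bigr => y ya; rewrite mulmx_sumr scaler_sumr.
apply: eq_bigr => s _ /=.
by rewrite -scalerA scalemxAr.
Qed.

Lemma Pop_add k (U : pred 'I_n) (f g : 'I_n -> 'M[R]_(d, k)) x :
  Pop U (fun y => f y + g y) x = Pop U f x + Pop U g x.
Proof. by rewrite /Pop -big_split; apply: eq_bigr => y _; rewrite mulmxDr scalerDr. Qed.

Lemma iter_Pop_add k (U : pred 'I_n) (f g : 'I_n -> 'M[R]_(d, k)) N :
  iter N (Pop U) (fun y => f y + g y) = (fun x => iter N (Pop U) f x + iter N (Pop U) g x).
Proof.
elim: N => [|N IH] //=; rewrite IH; apply: funext => x; exact: Pop_add.
Qed.

Lemma iter_Pop_ext k (U : pred 'I_n) (f g : 'I_n -> 'M[R]_(d, k)) :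
  (forall y, U y -> f y = g y) -> forall N x, U x -> iter N (Pop U) f x = iter N (Pop U) g x.
Proof.
move=> e; elim=> [|N IH] x Ux /=; first exact: e.
by apply: eq_bigr => y Uy; rewrite IH.
Qed.

Lemma Ex_iter t : Ex t = iter t (Pop W) (Ex 0).
Proof.
elim: t => [|t IH] //=; apply: funext => x; by rewrite ExS IH.
Qed.

Variable h : 'I_n -> 'M[R]_d.
Hypothesis ha : h a = 1%:M.
Hypothesis hharm : forall x, x != a -> \sum_y lap_block w sigma x y *m h y = 0.

Let ht := fun x => if x == a then 0 else h x.

Lemma ht_fix x : W x -> ht x = Ex 0 x + Pop W ht x.
Proof.
move=> Wx; rewrite /ht (negbTE Wx).
have dn : deg w x != 0 by apply: (deg_pos x a); rewrite eq_sym.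
rewrite {1}(harm_trans _ h x (hharm x Wx) dn) (bigD1 a) //= ha mulmx1 Ex0.
congr (_ + _); apply: eq_bigr => y ya; by rewrite /ht (negbTE ya).
Qed.

Lemma ht_decomp N x : W x -> ht x = \sum_(t < N) Ex t x + iter N (Pop W) ht x.
Proof.
move=> Wx; elim: N => [|N IH]; first by rewrite big_ord0 add0r.
rewrite IH big_ord_recr /= -addrA; congr (_ + _).
rewrite (iter_Pop_ext _ W ht (fun y => Ex 0 y + Pop W ht y) ht_fix N x Wx).
by rewrite iter_Pop_add -Ex_iter -iterS iterSr.
Qed.

Definition Yt := \sum_(y | W y) trans w a y *: (sigma a y *m h y).

Lemma partial_sum N :
  \sum_(t < N.+1) excursion_term w sigma a t =
  Yt - \sum_(y | W y) trans w a y *: (sigma a y *m iter N (Pop W) ht y).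
Proof.
rewrite big_ord_recl.
have -> : excursion_term w sigma a 0 = 0.
  by rewrite (_ : excursion_term w sigma a 0 = Ex 0 a) // Ex0 /trans w_diag mul0r scale0r.
rewrite add0r.
have -> : \sum_(i < N) excursion_term w sigma a (bump 0 i) =
          \sum_(i < N) Pop W (Ex i) a.
  by apply: eq_bigr => i _; rewrite -ExS.
rewrite /Pop exchange_big /Yt -sumrB; apply: eq_bigr => y Wy.
rewrite -scaler_sumr -mulmx_sumr -scalerBr -mulmxBr; congr (_ *: (_ *m _)).
have := ht_decomp N y Wy; rewrite {1}/ht (negbTE Wy) => ->; by rewrite addrK.
Qed.


Lemma omega_val : Omega1 w sigma a = Yt.
Proof.
apply/matrixP => r c; rewrite mxE.
apply: (cvg_lim (@Rhausdorff R)).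
apply/cvgrPdist_lt => eps e0.
set K := \sum_y qn (ht y).
have hK : forall y, W y -> qn (ht y) <= K.
  move=> y _; rewrite /K (bigD1 y) //= lerDl; apply: sumr_ge0 => z _; exact: qn_ge0.
have K0 : 0 <= K by apply: sumr_ge0 => y _; exact: qn_ge0.
have K1 : 0 < K + 1 by rewrite ltr_wpDl.
have e2 : 0 < eps / 2 by rewrite divr_gt0.
have [N0 hN0] := vanish W a Wa (fun y => conn y a) ((eps / 2) ^+ 2 / (K + 1))
   (divr_gt0 (exprn_gt0 2 e2) K1).
exists N0.+1 => // -[|N] //= hN.
rewrite partial_sum.
set D := \sum_(y | W y) _.
have -> : Yt r c - (Yt - D) r c = D r c by rewrite !mxE; ring.
rewrite /D summxE.
apply: le_lt_trans (ler_norm_sum _ _ _) _.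
apply: le_lt_trans (_ : _ <= \sum_(y | W y) trans w a y * (eps / 2)) _.
  apply: ler_sum => y Wy; rewrite mxE normrM ger0_norm ?trans_ge0 //.
  have := w_ge0 a y; rewrite le_eqVlt => /orP [/eqP e|pos].
    by rewrite /trans -e !mul0r.
  apply: ler_wpM2l; first exact: trans_ge0.
  set M := iter N (Pop W) ht y.
  have q1 := qn_entry _ (sigma a y *m M) r c.
  rewrite (qn_orth _ _ _ (orth a y pos)) in q1.
  have q2 := qn_iter d W ht K hK N y Wy.
  have v1 := hN0 N hN y Wy.
  have v0 := vv_ge0 W N y.
  rewrite ltr_pdivlMr // in v1.
  have q3 : qn M < (eps / 2) ^+ 2.
    apply: le_lt_trans q2 _; apply: le_lt_trans v1; rewrite mulrC.
    by apply: ler_wpM2l => //; rewrite lerDl.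
  have q4 := le_lt_trans q1 q3.
  set e := (sigma a y *m M) r c in q4 *.
  apply: ltW; rewrite ltr_norml; apply/andP; split; nra.
rewrite -mulr_suml.
apply: le_lt_trans (_ : _ <= 1 * (eps / 2)) _.
  by apply: ler_wpM2r; [exact: ltW | exact: sum_transP_le1].
by rewrite mul1r ltr_pdivrMr // ltr_pMr // ltr1n.
Qed.

Hypothesis dna : deg w a != 0.

Lemma omega_harm :
  \sum_y lap_block w sigma a y *m h y = deg w a *: (1%:M - Omega1 w sigma a).
Proof.
rewrite omega_val Lform ha scalerBr; congr (_ - _).
rewrite (bigD1 a) //= w_diag scale0r add0r /Yt scaler_sumr.
apply: eq_bigr => y _; by rewrite scalerA /trans mulrCA divff // mulr1.
Qed.
End Omega.

Lemma pinv_unit m (A : 'M[R]_m) : A \in unitmx -> pinv A = invmx A.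
Proof.
move=> uA.
have ex : exists X : 'M[R]_m, is_pinv A X.
  exists (invmx A); rewrite /is_pinv (mulmxV uA) mul1mx (mulVmx uA) mul1mx.
  by rewrite trmx1.
have hX : is_pinv A (pinv A) := @xgetPex _ 0 (fun X => is_pinv A X) ex.
case: hX => h1 _ _ _.
set X := pinv A in h1 *.
have -> : X = invmx A *m (A *m X *m A) *m invmx A.
  by rewrite !mulmxA (mulVmx uA) mul1mx -mulmxA (mulmxV uA) mulmx1.
by rewrite h1 (mulVmx uA) mul1mx.
Qed.

Section Schur.
Variables (i j : 'I_n).
Hypothesis ij : i != j.
Let S : seq 'I_n := [:: i; j].
Let Sc : seq 'I_n := [seq x <- enum 'I_n | x \notin S].
Let tS := in_tuple S.
Let tSc := in_tuple Sc.

Lemma ij' : i != j -> j != i.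
Proof. by rewrite eq_sym. Qed.

Lemma uniq_Sc : uniq Sc.
Proof. exact: filter_uniq (enum_uniq _). Qed.

Lemma tSc_inj : injective (tnth tSc).
Proof. by apply/tuple_uniqP; exact: uniq_Sc. Qed.

Lemma mem_Sc x : (x \in Sc) = (x \notin S).
Proof. by rewrite mem_filter mem_enum andbT. Qed.

Lemma tSc_notS r : tnth tSc r \notin S.
Proof. by rewrite -mem_Sc; exact: mem_tnth. Qed.

Lemma partition k (F : 'I_n -> 'M[R]_(d, k)) :
  \sum_x F x = \sum_(q < size S) F (tnth tS q) + \sum_(r < size Sc) F (tnth tSc r).
Proof.
have e1 : \sum_(r < size Sc) F (tnth tSc r) = \sum_(x | x \notin S) F x.
  rewrite -(big_tuple _ _ tSc xpredT) /= big_filter big_enum_cond /=.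
  by apply: eq_bigl => x; rewrite inE.
have e2 : \sum_(q < size S) F (tnth tS q) = F i + F j.
  by rewrite !big_ord_recl big_ord0 addr0.
rewrite e1 e2 (bigID (fun x => x \in S)) /=; congr (_ + _).
rewrite (bigD1 i) ?inE ?eqxx //= (bigD1 j) /=; last by rewrite !inE eqxx orbT eq_sym ij.
rewrite big1 ?addr0 // => x /andP [/andP [xS xi] xj].
by move: xS; rewrite !inE (negbTE xi) (negbTE xj).
Qed.


Definition colv (A : seq 'I_n) k (h : 'I_n -> 'M[R]_(d, k)) : 'M[R]_(\sum_(r < size A) d, k) :=
  mxcol (fun r : 'I_(size A) => (h (tnth (in_tuple A) r) : 'M[R]_((fun _ => d) r, k))).
Arguments colv A {k}.

Lemma Lcol (A : seq 'I_n) k (h : 'I_n -> 'M[R]_(d, k)) :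
  mxcol (fun p : 'I_(size A) => (\sum_x lap_block w sigma (tnth (in_tuple A) p) x *m h x
        : 'M[R]_((fun _ => d) p, k))) =
  lap_sub w sigma A S *m colv S h + lap_sub w sigma A Sc *m colv Sc h.
Proof.
rewrite /lap_sub /colv !mul_mxblock_mxrow -mxcolD; apply/eq_mxcolP => p.
exact: partition.
Qed.

Lemma submxcol0 m (p_ : 'I_m -> nat) k r : submxcol (0 : 'M[R]_(\sum_i p_ i, k)) r = 0.
Proof. by apply/matrixP => a b; rewrite !mxE. Qed.

Lemma mxcol_eq0 m (p_ : 'I_m -> nat) k (F : forall r, 'M[R]_(p_ r, k)) :
  mxcol F = 0 -> forall r, F r = 0.
Proof. by move=> e r; rewrite -(mxcolK F r) e submxcol0. Qed.

Definition extC k (c : 'M[R]_(\sum_(r < size Sc) d, k)) (x : 'I_n) : 'M[R]_(d, k) :=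
  \sum_r (tnth tSc r == x)%:R *: (submxcol c r : 'M[R]_(d, k)).
Arguments extC {k}.

Lemma extC_Sc k c r : @extC k c (tnth tSc r) = submxcol c r.
Proof.
rewrite /extC (bigD1 r) //= eqxx scale1r big1 ?addr0 // => r' rr'.
by rewrite (inj_eq tSc_inj) (negbTE rr') scale0r.
Qed.

Lemma extC_S k c x : x \in S -> @extC k c x = 0.
Proof.
move=> xS; rewrite /extC big1 // => r _.
have : tnth tSc r != x by apply/eqP => e; move: (tSc_notS r); rewrite e xS.
by move/negbTE => ->; rewrite scale0r.
Qed.

Lemma colv_extC k c : colv Sc (@extC k c) = c.
Proof. by apply/mxcolP => r; rewrite mxcolK extC_Sc. Qed.

Lemma colvS_extC k c : colv S (@extC k c) = 0.
Proof.
apply/mxcolP => q; rewrite mxcolK submxcol0 extC_S //; exact: mem_tnth.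
Qed.


Lemma Dunit : lap_sub w sigma Sc Sc \in unitmx.
Proof.
rewrite -unitmx_tr -row_free_unit; apply: inj_row_free => v hv.
set c := v^T.
have hc : lap_sub w sigma Sc Sc *m c = 0.
  by apply: trmx_inj; rewrite trmx_mul trmxK hv trmx0.
have harm : forall t, \sum_x lap_block w sigma (tnth tSc t) x *m extC c x = 0.
  have := Lcol Sc _ (extC c); rewrite colvS_extC colv_extC mulmx0 add0r hc.
  by move=> /mxcol_eq0 H t; exact: H t.
have f0 : forall x, extC c x = 0.
  apply: (uniq_harm 1 (fun x => x \in Sc) i).
  - by rewrite mem_Sc negbK !inE eqxx.
  - by move=> x; rewrite mem_Sc negbK; exact: extC_S.
  - by move=> x /(tnthP tSc) [t ->]; exact: harm t.
have c0 : c = 0.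
  by rewrite -(colv_extC _ c); apply/mxcolP => r; rewrite mxcolK f0 submxcol0.
by rewrite -(trmxK v) -/c c0 trmx0.
Qed.

Lemma SI k (h : 'I_n -> 'M[R]_(d, k)) :
  (forall t, \sum_x lap_block w sigma (tnth tSc t) x *m h x = 0) ->
  forall p : 'I_2, \sum_x lap_block w sigma (tnth tS p) x *m h x =
    \sum_(q < 2) cond_blk w sigma i j p q *m h (tnth tS q).
Proof.
move=> hh.
have e0 : lap_sub w sigma Sc S *m colv S h + lap_sub w sigma Sc Sc *m colv Sc h = 0.
  by rewrite -Lcol; apply/mxcolP => t; rewrite mxcolK submxcol0 hh.
have hB : lap_sub w sigma Sc Sc *m colv Sc h = - (lap_sub w sigma Sc S *m colv S h).
  by rewrite -(addKr (lap_sub w sigma Sc S *m colv S h) (lap_sub w sigma Sc Sc *m colv Sc h)) e0 addr0.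
have eC : colv Sc h = - (invmx (lap_sub w sigma Sc Sc) *m lap_sub w sigma Sc S *m colv S h).
  by rewrite -[LHS]mul1mx -(mulVmx Dunit) -[LHS]mulmxA hB mulmxN mulmxA.
have eM : mxcol (fun p : 'I_(size S) =>
     (\sum_x lap_block w sigma (tnth tS p) x *m h x : 'M[R]_((fun _ => d) p, k))) =
   mxcol (fun p : 'I_(size S) =>
     (\sum_(q < size S) cond_blk w sigma i j p q *m h (tnth tS q) : 'M[R]_((fun _ => d) p, k))).
  rewrite Lcol eC mulmxN !mulmxA -mulmxBl -(pinv_unit _ _ Dunit).
  have -> : lap_sub w sigma S S - lap_sub w sigma S Sc *m pinv (lap_sub w sigma Sc Sc)
      *m lap_sub w sigma Sc S = mxblock (fun p q => cond_blk w sigma i j p q).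
    by rewrite /cond_blk submxblockK.
  by rewrite /colv mul_mxblock_mxrow.
by move/eq_mxcolP: eM => eM p; exact: eM p.
Qed.

Lemma EX k (g : 'I_2 -> 'M[R]_(d, k)) : exists h : 'I_n -> 'M[R]_(d, k),
  (forall t, \sum_x lap_block w sigma (tnth tSc t) x *m h x = 0) /\
  (forall q : 'I_2, h (tnth tS q) = g q).
Proof.
set gS : 'M[R]_(\sum_(q < size S) d, k) :=
  mxcol (fun q : 'I_(size S) => (g q : 'M[R]_((fun _ => d) q, k))).
set gc := - (invmx (lap_sub w sigma Sc Sc) *m lap_sub w sigma Sc S *m gS).
pose h := fun x => if x \in S then (if x == i then g 0 else g 1) else extC gc x.
have hS : forall q : 'I_2, h (tnth tS q) = g q.
  rewrite /h; case=> [[|[|//]]] Hq /=.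
    rewrite !inE eqxx /=; congr g; exact: val_inj.
  rewrite !inE eqxx orbT (negbTE (ij' ij)) /=; congr g; exact: val_inj.
exists h; split => // t.
have colS : colv S h = gS by apply/mxcolP => q; rewrite !mxcolK hS.
have colC : colv Sc h = gc.
  by apply/mxcolP => r; rewrite !mxcolK /h (negbTE (tSc_notS r)) extC_Sc.
have := Lcol Sc _ h; rewrite colS colC /gc mulmxN !mulmxA (mulmxV Dunit) mul1mx addrN.
by move=> /mxcol_eq0 H; exact: H t.
Qed.

Lemma other2 (p q r : 'I_2) : p != q -> r != p -> r = q.
Proof.
by case: p q r => [[|[|//]] Hp] [[|[|//]] Hq] [[|[|//]] Hr] //= _ _; apply: val_inj.
Qed.

Lemma sum2 k (p q : 'I_2) (F : 'I_2 -> 'M[R]_(d, k)) : p != q ->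
  \sum_(r < 2) F r = F p + F q.
Proof.
rewrite !big_ord_recl big_ord0 addr0.
case: p q => [[|[|//]] Hp] [[|[|//]] Hq] //= _.
  by congr (F _ + F _); apply: val_inj.
by rewrite addrC; congr (F _ + F _); apply: val_inj.
Qed.

Lemma tS_neq (p q : 'I_2) : p != q -> tnth tS p != tnth tS q.
Proof.
case: p q => [[|[|//]] Hp] [[|[|//]] Hq] //= _; first [exact ij | exact (ij' ij)].
Qed.

Lemma core (p q : 'I_2) : p != q ->
  cond_blk w sigma i j p p - cond_blk w sigma i j p q *m pinv (cond_blk w sigma i j q q)
     *m cond_blk w sigma i j q p =
  deg w (tnth tS p) *: (1%:M - Omega1 w sigma (tnth tS p)).
Proof.
move=> pq.
have qp : (q == p) = false by rewrite eq_sym (negbTE pq).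
set a := tnth tS p; set b := tnth tS q.
have ba : b != a by rewrite /a /b eq_sym; exact: tS_neq.
have harmx : forall k (h : 'I_n -> 'M[R]_(d, k)),
    (forall t, \sum_x lap_block w sigma (tnth tSc t) x *m h x = 0) ->
    \sum_x lap_block w sigma b x *m h x = 0 ->
    forall x, x != a -> \sum_y lap_block w sigma x y *m h y = 0.
  move=> k h hC hb x xa; case xS: (x \in S).
    move: xS => /(tnthP tS) [r xr].
    have rp : r != p by apply: contraNneq xa => e; rewrite xr e.
    by rewrite xr (other2 p q r pq rp).
  have : x \in Sc by rewrite mem_Sc xS.
  by move=> /(tnthP tSc) [t ->]; exact: hC.
set Cqq := cond_blk w sigma i j q q.
have uC : Cqq \in unitmx.
  rewrite -unitmx_tr -row_free_unit; apply: inj_row_free => v hv.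
  set u := v^T.
  have hu : Cqq *m u = 0 by apply: trmx_inj; rewrite trmx_mul trmxK hv trmx0.
  pose g := fun r : 'I_2 => if r == p then (0 : 'M[R]_(d, 1)) else u.
  have [h [hC hS]] := EX 1 g.
  have hb : \sum_x lap_block w sigma b x *m h x = 0.
    rewrite (SI 1 h hC q) (sum2 _ p q) // !hS /g eqxx qp mulmx0 add0r.
    exact: hu.
  have Wa : ~~ (a != a) by rewrite eqxx.
  have f0 : forall x, ~~ (x != a) -> h x = 0.
    by move=> x; rewrite negbK => /eqP ->; rewrite /a hS /g eqxx.
  have h0 := uniq_harm 1 (fun x => x != a) a h Wa f0 (harmx 1 h hC hb).
  have := h0 b; rewrite /b hS /g qp => u0.
  by rewrite -(trmxK v) -/u u0 trmx0.
set beta := - (invmx Cqq *m cond_blk w sigma i j q p).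
pose g := fun r : 'I_2 => if r == p then (1%:M : 'M[R]_d) else beta.
have [h [hC hS]] := EX d g.
have hb : \sum_x lap_block w sigma b x *m h x = 0.
  rewrite (SI d h hC q) (sum2 _ p q) // !hS /g eqxx qp mulmx1 /beta mulmxN mulmxA.
  by rewrite (mulmxV uC) mul1mx addrN.
have ha : h a = 1%:M by rewrite /a hS /g eqxx.
have dna : deg w a != 0 by apply: (deg_pos a b).
have := omega_harm a h ha (harmx d h hC hb) dna.
rewrite (SI d h hC p) (sum2 _ p q) // !hS /g eqxx qp mulmx1 /beta mulmxN.
by rewrite (pinv_unit _ _ uC) mulmxA.
Qed.

End Schur.

End Main.



Theorem lemma5p5 (R : realType) (n d : nat) (w : 'I_n -> 'I_n -> R)
    (sigma : 'I_n -> 'I_n -> 'M[R]_d) :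
  connection_graph w sigma ->
  forall i j : 'I_n, i != j ->
    schurD (cond_blk w sigma i j 0 0) (cond_blk w sigma i j 0 1)
           (cond_blk w sigma i j 1 0) (cond_blk w sigma i j 1 1)
      = deg w i *: (1%:M - Omega1 w sigma i)
 /\ schurA (cond_blk w sigma i j 0 0) (cond_blk w sigma i j 0 1)
           (cond_blk w sigma i j 1 0) (cond_blk w sigma i j 1 1)
      = deg w j *: (1%:M - Omega1 w sigma j).
Proof.
move=> [[wsym w0 wdiag wconn] [wsig worth]] i j ij.
have orth : forall x y, 0 < w x y -> (sigma x y)^T *m sigma x y = 1%:M.
  by move=> x y h; case: (worth x y h).
split.
- exact: (core R n d w sigma w0 wdiag wconn orth i j ij 0 1 isT).
- exact: (core R n d w sigma w0 wdiag wconn orth i j ij 1 0 isT).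
Qed.
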